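(* Let $\Gamma$ be a finite simple graph with vertex set $\{1,\dots,V\}$. Let $\mathcal E$ be its set of directed edges, containing both orientations of each undirected edge, so that $|\mathcal E|$ is twice the number of undirected edges. Identify subsets $b\subseteq\mathcal E$ with bit-vectors in $\{0,1\}^{|\mathcal E|}$, and let $\mathrm{popcnt}(b)=|b|$. For $b\subseteq\mathcal E$, let $A(b)$ be the $V\times V$ matrix with $A(b)_{i,j}=1$ if $(j,i)\in b$ and $0$ otherwise. Fix $n=|\mathcal E|/2$ and set $\widetilde N_b=\mathrm{tr}\big(A(b)^n\big)$. Define $$N_b=\sum_{b'\subseteq b}(-1)^{|b|-|b'|}\,\widetilde N_{b'}.$$ Equivalently, ordering the bit-vectors in binary order, $N=Y_{|\mathcal E|}\widetilde N$, where $Y_1=\begin{pmatrix}1&0\\-1&1\end{pmatrix}$ and $Y_m=Y_1\otimes Y_{m-1}$ (Kronecker product) for $m>1$. Let $\mathcal B_{\rm Euler}$ be the set of subsets $b\subseteq\mathcal E$ that contain exactly one orientation of each undirected edge. Then the number $N_{\rm Euler}(\Gamma)$ of Eulerian cycles of $\Gamma$ satisfies $$N_{\rm Euler}(\Gamma)=\frac{2}{|\mathcal E|}\sum_{b\in\mathcal B_{\rm Euler}}N_b.$$ Here Eulerian cycles are counted up to cyclic shift, and a cycle and its reversal are counted as different.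
   Context: An Eulerian cycle is a closed walk traversing every undirected edge of $\Gamma$ exactly once. A periodic orbit of length $n$ is a closed walk of $n$ directed edges, considered up to cyclic shifts. Its support is the set of directed edges it uses. Its repetition number $r_p$ is the number of times it is a repetition of a shorter orbit. One has $\widetilde N_b=n\sum_{\mathrm{supp}(p)\subseteq b}1/r_p$ and $N_b=n\sum_{\mathrm{supp}(p)=b}1/r_p$, where the sums run over periodic orbits of length $n$. *)

(* Defs.v *)
From mathcomp Require Import all_boot all_order all_algebra.
Set Implicit Arguments. Unset Strict Implicit. Unset Printing Implicit Defensive.
Import GRing.Theory Num.Theory.

(* Vertices are 'I_V (i.e. {0,...,V-1}, standing for {1,...,V}).
   A finite simple graph is a symmetric irreflexive relation e on 'I_V. *)
Definition simple_graph (V : nat) (e : rel 'I_V) : Prop :=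
  symmetric e /\ irreflexive e.

Definition dedges (V : nat) (e : rel 'I_V) : {set 'I_V * 'I_V} :=
  [set p | e p.1 p.2].

Definition swap_de (V : nat) (p : 'I_V * 'I_V) : 'I_V * 'I_V := (p.2, p.1).

Definition Amat (V : nat) (b : {set 'I_V * 'I_V}) : 'M[int]_V :=
  \matrix_(i, j) ((((j, i) \in b) : nat)%:R)%R.

Definition Ntilde (V : nat) (e : rel 'I_V) (b : {set 'I_V * 'I_V}) : int :=
  (\tr (Amat b ^+ (#|dedges e| %/ 2)))%R.

Definition Nb (V : nat) (e : rel 'I_V) (b : {set 'I_V * 'I_V}) : int :=
  (\sum_(b' : {set 'I_V * 'I_V} | b' \subset b)
     (-1) ^+ (#|b| - #|b'|)%N * Ntilde e b')%R.

Definition B_Euler (V : nat) (e : rel 'I_V) : {set {set 'I_V * 'I_V}} :=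
  [set b : {set 'I_V * 'I_V} | (b \subset dedges e) &&
     [forall p in dedges e, (p \in b) != (swap_de p \in b)]].

Definition nedges (V : nat) (e : rel 'I_V) : nat := #|dedges e| %/ 2.

(* An Eulerian cycle, as a sequence of m = nedges directed edges
   w_0, ..., w_{m-1}: each w_k is a directed edge, the walk is closed
   (head of w_k = tail of w_{k+1 mod m}), and every undirected edge is
   traversed exactly once (in one of its two orientations). *)
Definition is_euler_walk (V : nat) (e : rel 'I_V)
    (w : (nedges e).-tuple ('I_V * 'I_V)) : bool :=
  [&& all (fun p => p \in dedges e) w,
      [forall k : 'I_(nedges e),
         (tnth w k).2 == (nth (tnth w k) w ((k.+1) %% nedges e)).1] &
      [forall p in dedges e, count_mem p w + count_mem (swap_de p) w == 1]].

(* Eulerian cycles counted up to cyclic shift (a cycle and its reversal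
   are different): the number of rotation classes of Eulerian walks. *)
Definition N_Euler (V : nat) (e : rel 'I_V) : nat :=
  #|[set [set rot_tuple k w | k : 'I_(nedges e)]
      | w in [set w : (nedges e).-tuple ('I_V * 'I_V) | @is_euler_walk V e w]]|.

(* Main.v *)
Require Import Defs.
From mathcomp Require Import all_boot all_order all_algebra.
From mathcomp Require Import zify.
Set Implicit Arguments. Unset Strict Implicit. Unset Printing Implicit Defensive.
Import GRing.Theory Num.Theory.
Local Open Scope ring_scope.

Lemma int_self_opp (s : int) : s = - s -> s = 0.
Proof. move=> h; lia. Qed.

Lemma alt_sum (T : finType) (S b : {set T}) :
  \sum_(b' : {set T} | b' \subset b) (-1) ^+ (#|b| - #|b'|)%N * ((S \subset b') : nat)%:R
  = ((S == b) : nat)%:R :> int.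
Proof.
have [Sb|nSb] := boolP (S \subset b); last first.
  rewrite big1; last first.
    move=> b' bb'; case: (boolP (S \subset b')) => Sb'; last by rewrite mulr0.
    by case/negP: nSb; apply: subset_trans bb'.
  by have -> : (S == b) = false by apply: contraNF nSb => /eqP ->.
have [->|nE] := eqVneq S b.
  rewrite (bigD1 b) //= subnn subxx expr0 mul1r big1 ?addr0 // => b' /andP[bb' nb'].
  case: (boolP (b \subset b')) => bb''; last by rewrite mulr0.
  by case/negP: nb'; rewrite eqEsubset bb' bb''.
have [x xb xS] : exists2 x, x \in b & x \notin S.
  apply/exists_inP; rewrite -(negbK [exists _ in _, _]) negb_exists_in.
  apply: contra nE => /forall_inP H; rewrite eqEsubset Sb /=.
  by apply/subsetP => y yb; move: (H y yb); rewrite negbK.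
set t := fun b' : {set T} => if x \in b' then b' :\ x else x |: b'.
have tK : involutive t.
  move=> b'; rewrite /t; case: (boolP (x \in b')) => xb'.
    by rewrite !inE eqxx /= setD1K.
  by rewrite setU11 setU1K.
have tsub b' : (t b' \subset b) = (b' \subset b).
  rewrite /t; case: (boolP (x \in b')) => xb'.
    apply/idP/idP => H; last exact: subset_trans (subD1set _ _) H.
    by rewrite -(setD1K xb') subUset sub1set xb H.
  by rewrite subUset sub1set xb.
apply: int_self_opp.
rewrite {1}(reindex_inj (inv_inj tK)) /= -sumrN; apply: eq_big => b'.
  exact: tsub.
rewrite tsub => bb'.
have Sx : (S \subset t b') = (S \subset b').
  rewrite /t; case: (boolP (x \in b')) => xb'.
    apply/idP/idP => H; first exact: subset_trans H (subD1set _ _).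
    apply/subsetP => y yS; rewrite !inE (subsetP H _ yS) andbT.
    by apply: contraNneq xS => <-.
  apply/idP/idP => H; last exact: subset_trans H (subsetUr _ _).
  apply/subsetP => y yS; move: (subsetP H _ yS); rewrite !inE.
  by case/orP=> // /eqP yx; case/negP: xS; rewrite -yx.
rewrite Sx -mulNr; congr (_ * _).
have lb := subset_leq_card bb'.
rewrite /t; case: (boolP (x \in b')) => xb'.
  have := cardsD1 x b'; rewrite xb' => cb.
  have -> : (#|b| - #|b' :\ x| = (#|b| - #|b'|).+1)%N by lia.
  by rewrite exprS mulN1r.
have := cardsU1 x b'; rewrite xb' => cb.
have tb : x |: b' \subset b by rewrite subUset sub1set xb.
have := subset_leq_card tb => lt.
have -> : (#|b| - #|b'| = (#|b| - #|x |: b'|).+1)%N by lia.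
by rewrite exprS mulN1r opprK.
Qed.
Definition lnk (V : nat) : rel ('I_V * 'I_V) := fun p q => p.2 == q.1.

Fixpoint linkb (V : nat) (b : {set 'I_V * 'I_V}) (j i : 'I_V)
  (w : seq ('I_V * 'I_V)) : bool :=
  match w with
  | [::] => j == i
  | p :: w' => [&& p.1 == j, p \in b & linkb b p.2 i w']
  end.

Lemma big_tuple_cons (T : finType) k (F : k.+1.-tuple T -> int) :
  \sum_(t : k.+1.-tuple T) F t = \sum_(x : T) \sum_(t : k.-tuple T) F [tuple of x :: t].
Proof.
rewrite pair_big /=.
rewrite (reindex (fun p : T * k.-tuple T => [tuple of p.1 :: p.2])) //=.
exists (fun t : k.+1.-tuple T => (thead t, [tuple of behead t])).
  by move=> [x t] _ /=; rewrite theadE; congr (_, _); apply: val_inj.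
by move=> t _ /=; rewrite [in RHS](tuple_eta t).
Qed.

Lemma powA V (b : {set 'I_V * 'I_V}) k i j :
  (Amat b ^+ k) i j = \sum_(w : k.-tuple ('I_V * 'I_V)) (linkb b j i w : nat)%:R.
Proof.
elim: k i j => [|k IH] i j.
  rewrite expr0 (big_pred1 [tuple]); last by move=> t; symmetry; apply/eqP; apply: tuple0.
  by rewrite /= mxE eq_sym.
rewrite exprSr -mulmxE mxE big_tuple_cons.
under eq_bigr => l _ do rewrite IH mulr_suml.
rewrite exchange_big /=.
rewrite (eq_bigr (fun p : 'I_V * 'I_V =>
  ((p.1 == j) : nat)%:R * \sum_(w : k.-tuple _) (((p.1, p.2) \in b) && linkb b p.2 i w : nat)%:R)); last first.
  move=> p _; rewrite -surjective_pairing mulr_sumr; apply: eq_bigr => w _ /=.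
  by case: (p.1 == j); case: (p \in b); case: linkb; rewrite /= ?mul1r ?mul0r.
rewrite -(pair_bigA _ (fun x l => ((x == j) : nat)%:R *
   \sum_(w : k.-tuple _) (((x, l) \in b) && linkb b l i w : nat)%:R)) /=.
rewrite [RHS](bigD1 j) //= [X in _ + X]big1 ?addr0; last by move=> x xj; rewrite (negbTE xj); rewrite big1 // => l; rewrite mul0r.
rewrite eqxx; under [RHS]eq_bigr do rewrite mul1r. rewrite [RHS]exchange_big /=; apply: eq_bigr => w _; apply: eq_bigr => l _.
by rewrite mxE; case: linkb; case: ((j, l) \in b); rewrite /= ?mulr1 ?mulr0.
Qed.
Lemma linkb_path V (b : {set 'I_V * 'I_V}) x i s :
  linkb b x.2 i s = [&& all (fun p => p \in b) s, path (@lnk V) x s & (last x s).2 == i].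
Proof.
elim: s x => [|q s IH] x /=; first by [].
rewrite IH /lnk eq_sym.
by case: (x.2 == q.1); case: (q \in b); case: all.
Qed.

Lemma sum_linkb V (b : {set 'I_V * 'I_V}) s : s != [::] ->
  \sum_i (linkb b i i s : nat)%:R = (all (fun p => p \in b) s && cycle (@lnk V) s : nat)%:R :> int.
Proof.
case: s => [//|p s] _ /=.
rewrite (bigD1 p.1) //= [X in _ + X]big1 ?addr0; last first.
  by move=> x xp; rewrite eq_sym (negbTE xp).
rewrite eqxx /= -[p.2]/((p.2, p.2).2) linkb_path /= rcons_path.
congr ((_ : nat)%:R).
case: s => [|q s] /=; first by case: (p \in b).
by rewrite /lnk /=; case: (p \in b).
Qed.

Lemma trA V (b : {set 'I_V * 'I_V}) n : (0 < n)%N ->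
  \tr (Amat b ^+ n) = \sum_(w : n.-tuple ('I_V * 'I_V))
     (all (fun p => p \in b) w && cycle (@lnk V) w : nat)%:R.
Proof.
move=> n0; rewrite /mxtrace.
under eq_bigr do rewrite powA.
rewrite exchange_big /=; apply: eq_bigr => w _.
apply: sum_linkb; case: w => [[|p s] //= sz]; move: sz n0; by move/eqP <-.
Qed.

Definition supp (T : finType) (s : seq T) : {set T} := [set p | p \in s].

Lemma all_supp (T : finType) (s : seq T) (b : {set T}) :
  all (fun p => p \in b) s = (supp s \subset b).
Proof.
apply/allP/subsetP => H x; first by rewrite inE => /H.
by move=> xs; apply: H; rewrite inE.
Qed.

Lemma Nb_eq V (e : rel 'I_V) b : (0 < nedges e)%N ->
  Nb e b = \sum_(w : (nedges e).-tuple ('I_V * 'I_V))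
     (cycle (@lnk V) w : nat)%:R * ((supp w == b) : nat)%:R.
Proof.
move=> m0; rewrite /Nb /Ntilde.
under eq_bigr do rewrite (trA _ m0) mulr_sumr.
rewrite exchange_big /=; apply: eq_bigr => w _.
rewrite -(alt_sum (supp w) b) mulr_sumr; apply: eq_bigr => b' _.
rewrite all_supp mulrCA; congr (_ * _).
by case: cycle; case: (_ \subset _); rewrite /= ?mul1r ?mul0r.
Qed.

Lemma cycle_nthP (T : eqType) (r : rel T) (s : seq T) x0 :
  reflect (forall k, (k < size s)%N -> r (nth x0 s k) (nth x0 s (k.+1 %% size s)))
          (cycle r s).
Proof.
case: s => [|p s]; first by left.
rewrite /cycle; apply: (iffP (pathP x0)) => H k.
  rewrite /= ltnS => kl; have := H k; rewrite size_rcons => /(_ (leq_trans kl (leqnn _))).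
  rewrite -rcons_cons nth_rcons /= ltnS kl.
  rewrite nth_rcons; case: ltngtP kl => // [kls _ | ->] .
    by rewrite modn_small.
  by move=> _; rewrite modnn.
rewrite size_rcons => kl; have := H k; rewrite /= ltnS -ltnS kl => /(_ isT).
rewrite -rcons_cons nth_rcons /= ltnS -ltnS kl nth_rcons.
move=> h; have [kls|kls|ek] := ltngtP k (size s).
- by rewrite modn_small // in h.
- exfalso; lia.
- by move: h; rewrite ek modnn /= ?ltnn ?eqxx.
Qed.

Lemma cycle_tuple V n (w : n.-tuple ('I_V * 'I_V)) :
  [forall k : 'I_n, (tnth w k).2 == (nth (tnth w k) w ((k.+1) %% n)).1]
  = cycle (@lnk V) w.
Proof.
case: n w => [|n] w.
  by rewrite (tuple0 w) /=; apply/forallP => [[]].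
have sz := size_tuple w.
set x0 := tnth w ord0.
apply/forallP/(cycle_nthP _ _ x0) => H k.
  rewrite sz => kl; have := H (Ordinal kl); rewrite /lnk !(tnth_nth x0) /=.
  rewrite (set_nth_default x0) //. by rewrite sz ltn_mod.
move=> /=; rewrite /lnk (tnth_nth x0) (set_nth_default x0); last by rewrite sz ltn_mod.
by have := H k; rewrite sz ltn_ord => /(_ isT).
Qed.

Lemma cardB V (e : rel 'I_V) b : simple_graph e -> b \in B_Euler e ->
  #|dedges e| = (2 * #|b|)%N.
Proof.
move=> [sym irr]; rewrite inE => /andP[bE /forall_inP F].
have swK : involutive (@swap_de V) by move=> [x y].
have -> : dedges e = b :|: (@swap_de V) @^-1: b.
  apply/setP => p; rewrite !inE; apply/idP/idP => [pE | /orP[pb|spb]].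
  - have pE' : p \in dedges e by rewrite inE.
    by have := F p pE'; case: (p \in b); case: (swap_de p \in b).
  - by have := subsetP bE p pb; rewrite inE.
  - by have := subsetP bE _ spb; rewrite !inE /= sym.
rewrite cardsU card_preimset; last exact: inv_inj.
have -> : b :&: (@swap_de V) @^-1: b = set0.
  apply/setP => p; rewrite !inE; apply/negP => /andP[pb spb].
  by have := F p (subsetP bE p pb); rewrite pb spb.
by rewrite cards0 subn0 mul2n addnn.
Qed.

Lemma nedgesB V (e : rel 'I_V) b : simple_graph e -> b \in B_Euler e ->
  nedges e = #|b|.
Proof. by move=> sg bB; rewrite /nedges (cardB sg bB) mulKn. Qed.

Lemma euler_iff V (e : rel 'I_V) (w : (nedges e).-tuple ('I_V * 'I_V)) :
  simple_graph e ->
  is_euler_walk w = cycle (@lnk V) w && (supp w \in B_Euler e).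
Proof.
move=> sg; rewrite /is_euler_walk cycle_tuple inE -all_supp.
apply/idP/idP.
  move=> /and3P[aw cw /forall_inP F1]; rewrite cw aw /=.
  apply/forall_inP => p pE; have := F1 p pE; rewrite !inE.
  rewrite -!has_pred1 !has_count.
  by move=> /eqP; case: (count _ _) => [|[|a]]; case: (count _ _) => [|[|c]].
move=> /andP[cw /andP[aw /forall_inP F2]].
have Bw : supp w \in B_Euler e by rewrite inE -all_supp aw; apply/forall_inP.
have uw : uniq w.
  have h := nedgesB sg Bw; rewrite /supp cardsE in h.
  by apply/card_uniqP/esym; rewrite size_tuple.
rewrite aw cw /=; apply/forall_inP => p pE.
rewrite !count_uniq_mem //; have := F2 p pE; rewrite !inE.
by case: (p \in w); case: (swap_de p \in w).
Qed.

Lemma sumB_int V (e : rel 'I_V) : simple_graph e -> (0 < nedges e)%N ->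
  \sum_(b in B_Euler e) Nb e b =
  (#|[set w : (nedges e).-tuple ('I_V * 'I_V) | @is_euler_walk V e w]|)%:R.
Proof.
move=> sg m0.
under eq_bigr do rewrite Nb_eq //.
rewrite exchange_big /=.
rewrite (eq_bigr (fun w : (nedges e).-tuple ('I_V * 'I_V) =>
   if is_euler_walk w then 1 else 0)); last first.
  move=> w _; rewrite -mulr_sumr euler_iff //.
  case: (cycle _ _); rewrite /= ?mul0r ?mul1r //.
  case: (boolP (supp w \in B_Euler e)) => Bw.
    rewrite (bigD1 (supp w)) //= eqxx big1 ?addr0 // => b /andP[_ nb].
    by rewrite eq_sym (negbTE nb).
  rewrite big1 // => b bB; case: eqP => // eb.
  by case/negP: Bw; rewrite eb.
by rewrite -big_mkcond sumr_const cardsE.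
Qed.

Lemma nth_rot0 (T : Type) (x0 : T) (s : seq T) k : (k < size s)%N ->
  nth x0 (rot k s) 0 = nth x0 s k.
Proof.
move=> ks; rewrite /rot nth_cat size_drop subn_gt0 ks nth_drop addn0 //.
Qed.

Section StepB.
Variables (V : nat) (e : rel 'I_V).
Hypothesis sg : simple_graph e.
Let m := nedges e.
Hypothesis m0 : (0 < m)%N.
Let T := (m.-tuple ('I_V * 'I_V)).
Let orb (w : T) := [set rot_tuple k w | k : 'I_m].

Lemma euler_rot (w : T) k : is_euler_walk w -> is_euler_walk (rot_tuple k w).
Proof.
rewrite !euler_iff // => /andP[cw Bw]; rewrite /= rot_cycle cw /=.
suff -> : supp (rot k w) = supp w by [].
by apply/setP => p; rewrite !inE mem_rot.
Qed.

Lemma euler_uniq (w : T) : is_euler_walk w -> uniq w.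
Proof.
rewrite euler_iff // => /andP[_ Bw].
have h := nedgesB sg Bw; rewrite /supp cardsE in h.
by apply/card_uniqP/esym; rewrite size_tuple.
Qed.

Lemma card_orb (w : T) : is_euler_walk w -> #|orb w| = m.
Proof.
move=> ew; rewrite card_imset ?card_ord // => i j /(congr1 val) /= h.
apply: val_inj => /=; apply/eqP.
have x0 := tnth w i.
have := congr1 (fun s => nth x0 s 0) h; rewrite /= !nth_rot0 ?size_tuple //.
by move/eqP; rewrite nth_uniq ?size_tuple // euler_uniq.
Qed.

Lemma orb_rot (w : T) k : is_euler_walk w -> orb (rot_tuple k w) = orb w.
Proof.
move=> ew; apply/eqP; rewrite eqEcard !card_orb ?euler_rot // leqnn andbT.
apply/subsetP => z /imsetP[j _ ->].
have := leq_rot_add k j w; rewrite size_tuple; set r := rot_add w k j => rm.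
apply/imsetP; case: (ltngtP r m) rm => // [rlt _ | req _].
  exists (Ordinal rlt) => //; apply: val_inj; by rewrite /= rot_rot_add.
exists (Ordinal m0) => //; apply: val_inj; rewrite /= rot_rot_add -/r req rot0.
by rewrite -{1}(size_tuple w) rot_size.
Qed.

Lemma card_W :
  #|[set w : T | is_euler_walk w]| = (m * N_Euler e)%N.
Proof.
rewrite /N_Euler -/m -/T.
set W := [set w : T | is_euler_walk w].
set P := [set orb w | w in W].
have self (w : T) : w \in orb w.
  apply/imsetP; exists (Ordinal m0) => //; apply: val_inj; by rewrite /= rot0.
have inorb (w z : T) : z \in orb w -> exists k, z = rot_tuple k w.
  by move=> /imsetP[k _ ->]; exists k.
have partP : partition P W.
  apply/and3P; split.
  - apply/eqP/setP => w; apply/bigcupP/idP.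
      move=> [A /imsetP[w' w'W ->] /inorb [k ->]].
      by move: w'W; rewrite !inE; exact: euler_rot.
    move=> wW; exists (orb w); first exact: imset_f.
    exact: self.
  - apply/trivIsetP => A B /imsetP[w1 W1 ->] /imsetP[w2 W2 ->] neq.
    rewrite -setI_eq0; apply/negPn/negP => /set0Pn [z /setIP[z1 z2]].
    case/negP: neq; move: W1 W2; rewrite !inE => W1 W2.
    case: (inorb _ _ z1) => k1 e1; case: (inorb _ _ z2) => k2 e2.
    by rewrite -(orb_rot k1 W1) -(orb_rot k2 W2) -e1 -e2.
  - apply/imsetP => [[w wW e0]].
    by have := self w; rewrite -e0 inE.
rewrite (card_partition partP).
rewrite (eq_bigr (fun _ => m)); last first.
  by move=> A /imsetP[w wW ->]; rewrite card_orb //; move: wW; rewrite inE.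
by rewrite sum_nat_const mulnC.
Qed.
End StepB.

From mathcomp Require Import ring.

Theorem mainTheorem7 (V : nat) (e : rel 'I_V) :
  simple_graph e -> (0 < #|dedges e|)%N ->
  (N_Euler e)%:R = (2%:R / (#|dedges e|)%:R : rat) *
                   \sum_(b in B_Euler e) (Nb e b)%:~R.
Proof.
move=> sg E0.
set b0 := [set p in dedges e | (p.1 < p.2)%N].
have b0B : b0 \in B_Euler e.
  rewrite inE; apply/andP; split.
    by apply/subsetP => p; rewrite inE => /andP[].
  apply/forall_inP => p pE; rewrite !inE /=.
  have pE' := pE; rewrite inE in pE'.
  have sE : e p.2 p.1 by case: sg => sym _; rewrite sym.
  rewrite pE' sE /=.
  have : p.1 != p.2 by apply: contraTneq pE' => ->; case: sg => _ ->.
  move=> /eqP ne; case: ltngtP => // h; case: ne; exact: val_inj.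
have hE := cardB sg b0B.
have hm := nedgesB sg b0B.
have m0 : (0 < nedges e)%N by rewrite hm; move: E0; rewrite hE; case: #|b0|.
have -> : \sum_(b in B_Euler e) (Nb e b)%:~R = ((\sum_(b in B_Euler e) Nb e b)%:~R : rat).
  by rewrite rmorph_sum.
rewrite sumB_int // card_W // hE -hm.
rewrite natz -[((Posz _)%:~R : rat)]/(_%:R) !natrM.
have hz : (nedges e)%:R != (0 : rat) by rewrite pnatr_eq0 -lt0n.
by field; rewrite hz.
Qed.
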